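(* $R(\{C_4,P_5\},\{C_4,P_5\}) = 5$; that is, $5$ is the least integer $N$ such that for every $n \geq N$, every red/blue coloring of the edges of $K_n$ contains a red $C_4$ or red $P_5$, or a blue $C_4$ or blue $P_5$.
   Context: $C_4$ is the cycle on $4$ vertices and $P_5$ is the path on $5$ vertices. For sets of graphs $\mathscr{G}$ and $\mathscr{H}$, $R(\mathscr{G},\mathscr{H})$ is the minimum integer $N$ such that any $2$-coloring (red and blue) of the edges of $K_n$ with $n \geq N$ contains either a red copy of some graph in $\mathscr{G}$ or a blue copy of some graph in $\mathscr{H}$. *)

(* Defs.v *)
From Stdlib Require Import List.
From mathcomp Require Import all_boot.
Set Implicit Arguments. Unset Strict Implicit. Unset Printing Implicit Defensive.

Definition graph (k : nat) := 'I_k -> 'I_k -> bool.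

Definition C4 : graph 4 := fun i j =>
  ((i : nat) == (j + 1) %% 4) || ((j : nat) == (i + 1) %% 4).

Definition P5 : graph 5 := fun i j =>
  ((i : nat) == j + 1) || ((j : nat) == i + 1).

(* A 2-colouring of the edges of K_n: a symmetric map on pairs of distinct
   vertices; true = red, false = blue.  Values on the diagonal are irrelevant. *)
Definition coloring (n : nat) := 'I_n -> 'I_n -> bool.
Definition symmetric_coloring n (c : coloring n) := forall x y, c x y = c y x.

Definition has_mono_copy n (c : coloring n) (col : bool) k (H : graph k) :=
  exists f : 'I_k -> 'I_n, injective f /\
    forall i j, H i j -> c (f i) (f j) = col.

Definition family := seq {k : nat & graph k}.

Definition arrows n (c : coloring n) (G H : family) :=
  (exists2 g, In g G & has_mono_copy c true (projT2 g)) \/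
  (exists2 h, In h H & has_mono_copy c false (projT2 h)).

Definition ramsey_good (G H : family) (N : nat) :=
  forall n, N <= n -> forall c : coloring n, symmetric_coloring c -> arrows c G H.

Definition is_ramsey_number (G H : family) (N : nat) :=
  ramsey_good G H N /\ forall M, ramsey_good G H M -> N <= M.

Definition C4P5 : family := [:: existT graph 4 C4; existT graph 5 P5].

(* Main.v *)
Require Import Defs.
From mathcomp Require Import all_boot.
Set Implicit Arguments. Unset Strict Implicit. Unset Printing Implicit Defensive.

Definition allpairs_ok k (P : nat -> nat -> bool) :=
  all (fun i => all (fun j => P i j) (iota 0 k)) (iota 0 k).

Definition ok k (Hn : nat -> nat -> bool) (e : nat -> nat -> bool) col (l : seq nat) :=
  [&& uniq l, size l == k, all (fun x => x < 5) l &
   allpairs_ok k (fun i j =>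
      Hn i j ==> (i != j) && (e (nth 0 l i) (nth 0 l j) == col))].

Definition C4n (i j : nat) := (i == (j + 1) %% 4) || (j == (i + 1) %% 4).
Definition P5n (i j : nat) := (i == j + 1) || (j == i + 1).

Definition good (e : nat -> nat -> bool) :=
  has (fun l => [|| ok 4 C4n e true (take 4 l), ok 4 C4n e false (take 4 l),
                   ok 5 P5n e true l | ok 5 P5n e false l]) (permutations (iota 0 5)).

Definition idx i j := (i * (9 - i)) %/ 2 + j - i - 1.
Definition tbl (bs : seq bool) a b := nth false bs (idx (minn a b) (maxn a b)).

Lemma all_tables b0 b1 b2 b3 b4 b5 b6 b7 b8 b9 :
  good (tbl [:: b0; b1; b2; b3; b4; b5; b6; b7; b8; b9]).
Proof.
move: b0 b1 b2 b3 b4 b5 b6 b7 b8 b9.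
by do 10 case; vm_compute.
Qed.

Lemma sound n' (c : coloring n'.+1) k (H : graph k) (Hn : nat -> nat -> bool) e' col l :
  4 < n'.+1 -> (forall i j : 'I_k, H i j = Hn i j) ->
  (forall a b, a < 5 -> b < 5 -> a != b -> e' a b = c (inord a) (inord b)) ->
  ok k Hn e' col l -> has_mono_copy c col H.
Proof.
move=> n5 HH agr /and4P [u /eqP sz al fa].
have lt5 : forall i : 'I_k, nth 0 l i < 5.
  by move=> i; apply: (allP al); apply: mem_nth; rewrite sz.
exists (fun i => inord (nth 0 l i)); split.
  move=> i j /(congr1 val) /=.
  rewrite !inordK; try by apply: leq_trans n5; apply: lt5.
  move/eqP; rewrite nth_uniq ?sz // => /eqP; exact: val_inj.
move=> i j Hij.
have := allP fa i; rewrite mem_iota /= => /(_ (ltn_ord i)) /allP /(_ j).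
rewrite mem_iota /= => /(_ (ltn_ord j)).
rewrite -HH Hij /= => /andP [nij /eqP <-].
rewrite agr //; rewrite nth_uniq ?sz //.
Qed.

Lemma agree (e : nat -> nat -> bool) : (forall a b, e a b = e b a) ->
  forall a b, a < 5 -> b < 5 -> a != b ->
  tbl [:: e 0 1; e 0 2; e 0 3; e 0 4; e 1 2; e 1 3; e 1 4; e 2 3; e 2 4; e 3 4] a b = e a b.
Proof.
move=> sym [|[|[|[|[|a]]]]] [|[|[|[|[|b]]]]] //= _ _ _; rewrite /tbl /= // sym //.
Qed.

Definition c0n (i j : nat) := (i == j + 1) || (j == i + 1).
Definition c0 : coloring 4 := fun i j => c0n i j.

Lemma noC4 col a b c d : a < 4 -> b < 4 -> c < 4 -> d < 4 ->
  [&& a != b, a != c, a != d, b != c, b != d & c != d] ->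
  ~~ [&& c0n a b == col, c0n b c == col, c0n c d == col & c0n d a == col].
Proof.
by case: col; move: a b c d => [|[|[|[|a]]]] [|[|[|[|b]]]] [|[|[|[|c]]]] [|[|[|[|d]]]].
Qed.

Theorem lemma2 : is_ramsey_number C4P5 C4P5 5.
Proof.
split.
  case=> [|n'] // n5 c sym.
  pose e a b := c (inord a) (inord b).
  have esym : forall a b, e a b = e b a by move=> a b; rewrite /e sym.
  have := all_tables (e 0 1) (e 0 2) (e 0 3) (e 0 4) (e 1 2) (e 1 3) (e 1 4) (e 2 3) (e 2 4) (e 3 4).
  move/hasP => [l _].
  have agr := agree esym.
  have H4 : forall i j : 'I_4, C4 i j = C4n i j by [].
  have H5 : forall i j : 'I_5, P5 i j = P5n i j by [].
  case/or4P.
  - by move/(sound n5 H4 agr) => H; left; exists (existT graph 4 C4) => //; left.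
  - by move/(sound n5 H4 agr) => H; right; exists (existT graph 4 C4) => //; left.
  - by move/(sound n5 H5 agr) => H; left; exists (existT graph 5 P5) => //; right; left.
  - by move/(sound n5 H5 agr) => H; right; exists (existT graph 5 P5) => //; right; left.
move=> M HM; rewrite leqNgt; apply/negP => M4.
have [] := HM 4 M4 c0.
  by move=> x y; rewrite /c0 /c0n orbC.
- move=> [g [<-|[<-|[]]]] /= [f [inj Hf]].
  + have := noC4 true (ltn_ord (f (@Ordinal 4 0 isT))) (ltn_ord (f (@Ordinal 4 1 isT)))
        (ltn_ord (f (@Ordinal 4 2 isT))) (ltn_ord (f (@Ordinal 4 3 isT))).
    have h1 := Hf (@Ordinal 4 0 isT) (@Ordinal 4 1 isT) erefl.
    have h2 := Hf (@Ordinal 4 1 isT) (@Ordinal 4 2 isT) erefl.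
    have h3 := Hf (@Ordinal 4 2 isT) (@Ordinal 4 3 isT) erefl.
    have h4 := Hf (@Ordinal 4 3 isT) (@Ordinal 4 0 isT) erefl.
    rewrite /c0 in h1 h2 h3 h4.
    by rewrite !(inj_eq (@ord_inj 4)) !(inj_eq inj) /= h1 h2 h3 h4 /=; move=> /(_ isT).
  + by have := leq_card f inj; rewrite !card_ord.
- move=> [g [<-|[<-|[]]]] /= [f [inj Hf]].
  + have := noC4 false (ltn_ord (f (@Ordinal 4 0 isT))) (ltn_ord (f (@Ordinal 4 1 isT)))
        (ltn_ord (f (@Ordinal 4 2 isT))) (ltn_ord (f (@Ordinal 4 3 isT))).
    have h1 := Hf (@Ordinal 4 0 isT) (@Ordinal 4 1 isT) erefl.
    have h2 := Hf (@Ordinal 4 1 isT) (@Ordinal 4 2 isT) erefl.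
    have h3 := Hf (@Ordinal 4 2 isT) (@Ordinal 4 3 isT) erefl.
    have h4 := Hf (@Ordinal 4 3 isT) (@Ordinal 4 0 isT) erefl.
    rewrite /c0 in h1 h2 h3 h4.
    by rewrite !(inj_eq (@ord_inj 4)) !(inj_eq inj) /= h1 h2 h3 h4 /=; move=> /(_ isT).
  + by have := leq_card f inj; rewrite !card_ord.
Qed.
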